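(* The sequence $\langle\{P_n\}_{n\in\mathbb{N}},\{p^m_k\}_{k<m}\rangle$, where $P_n=\{0,1,2,3\}^n$ with order $\le_n$ and $p^m_k$ is restriction to the first $k$ coordinates, is a Fraïssé sequence in the category of finite posets with quotient maps; i.e. (U) for every finite poset $X$ there are $n$ and a quotient map $P_n\to X$; and (A) for every $k\in\mathbb{N}$, every finite poset $Y$ and every quotient map $f:Y\to P_k$ there exist $\ell>k$ and a quotient map $g:P_\ell\to Y$ with $f\circ g=p^\ell_k$.
   Context: $x\le_n y$ iff $x=y$ or (i) there is $l<n$ with $x(k)=y(k)$ for $k<l$, $x(l)=2$, $y(l)=3$, and $x(k)=y(k)\in\{0,1\}$ for $l<k<n$; or (ii) $x(0)=0$, $y(0)=1$ and $x(k)=y(k)\in\{0,1\}$ for $1\le k<n$ (coordinates indexed $0,\dots,n-1$). A quotient map between posets is a surjective order-preserving map $\phi:A\to B$ such that for all $p\le r$ in $B$ there are $x\le y$ in $A$ with $\phi(x)=p$, $\phi(y)=r$. *)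

(* Defs.v *)
From mathcomp Require Import all_boot.
Set Implicit Arguments. Unset Strict Implicit. Unset Printing Implicit Defensive.

Definition is_poset (T : finType) (le : rel T) : Prop :=
  [/\ reflexive le, antisymmetric le & transitive le].

Definition quotient_map (A B : finType) (leA : rel A) (leB : rel B)
  (phi : A -> B) : Prop :=
  [/\ (forall b : B, exists a : A, phi a = b),
      (forall x y : A, leA x y -> leB (phi x) (phi y)) &
      (forall p r : B, leB p r ->
         exists x y : A, [/\ leA x y, phi x = p & phi y = r])].

Definition P (n : nat) : finType := {ffun 'I_n -> 'I_4}.

Definition leq_P (n : nat) (x y : P n) : bool :=
  (x == y)
  || [exists l : 'I_n,
        [forall k : 'I_n, (k < l) ==> (x k == y k)]
        && (val (x l) == 2) && (val (y l) == 3)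
        && [forall k : 'I_n, (l < k) ==> ((x k == y k) && (val (x k) < 2))]]
  || ([exists i0 : 'I_n, (val i0 == 0) && (val (x i0) == 0) && (val (y i0) == 1)]
      && [forall k : 'I_n, (0 < val k) ==> ((x k == y k) && (val (x k) < 2))]).

Definition restr (k m : nat) (H : k <= m) (x : P m) : P k :=
  [ffun i : 'I_k => x (widen_ord H i)].

(* Main.v *)
Require Import Defs.
From mathcomp Require Import all_boot zify.
Set Implicit Arguments. Unset Strict Implicit. Unset Printing Implicit Defensive.

Definition lowat n (x : P n) (p : 'I_n) : Prop :=
  (forall i : 'I_n, p < i -> x i < 2) /\ ((x p : nat) = 2 \/ ((p : nat) = 0 /\ (x p : nat) = 0)).
Definition highat n (y : P n) (p : 'I_n) : Prop :=
  (forall i : 'I_n, p < i -> y i < 2) /\ ((y p : nat) = 3 \/ ((p : nat) = 0 /\ (y p : nat) = 1)).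
Definition lts n (x y : P n) (p : 'I_n) : Prop :=
  [/\ forall i, i != p -> y i = x i, lowat x p, highat y p & (y p : nat) = ((x p : nat)).+1].

Lemma low_high n (x : P n) p p' : lowat x p -> highat x p' -> False.
Proof.
case=> Hl1 Hl2 [Hh1 Hh2]; case: (ltngtP p p') => H.
- by have := Hl1 _ H; lia.
- by have := Hh1 _ H; lia.
- have E : p = p' by apply: val_inj.
  by subst; lia.
Qed.

Lemma low_uniq n (x : P n) p p' : lowat x p -> lowat x p' -> p = p'.
Proof.
case=> Hl1 Hl2 [Hh1 Hh2]; case: (ltngtP p p') => H.
- by have := Hl1 _ H; lia.
- by have := Hh1 _ H; lia.
- by apply: val_inj.
Qed.

Lemma high_uniq n (x : P n) p p' : highat x p -> highat x p' -> p = p'.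
Proof.
case=> Hl1 Hl2 [Hh1 Hh2]; case: (ltngtP p p') => H.
- by have := Hl1 _ H; lia.
- by have := Hh1 _ H; lia.
- by apply: val_inj.
Qed.

Lemma leq_PP n (x y : P n) : leq_P x y <-> x = y \/ exists p, lts x y p.
Proof.
split.
- rewrite /leq_P; case/orP; [case/orP|].
  + by move/eqP; left.
  + case/existsP=> l /andP[/andP[/andP[/forallP H1 /eqP H2] /eqP H3] /forallP H4].
    right; exists l; split.
    * move=> i Hi; case: (ltngtP i l) => Hil.
      - by apply/esym/eqP; have := H1 i; rewrite Hil.
      - by apply/esym; have := H4 i; rewrite Hil /= => /andP[/eqP].
      - by move: Hi; rewrite (val_inj Hil) eqxx.
    * split; last by left.
      by move=> i Hi; have := H4 i; rewrite Hi /= => /andP[_].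
    * split; last by left.
      move=> i Hi; have := H4 i; rewrite Hi /= => /andP[/eqP <-] //.
    * by rewrite H2 H3.
  + case/andP=> /existsP[i0 /andP[/andP[/eqP H0 /eqP H1] /eqP H2]] /forallP H4.
    right; exists i0; split.
    * move=> i Hi; have Hi0 : 0 < i.
        by rewrite lt0n; apply: contra Hi => /eqP Hi; apply/eqP/val_inj; rewrite /= Hi H0.
      by apply/esym; have := H4 i; rewrite Hi0 /= => /andP[/eqP].
    * split; last by right.
      by move=> i Hi; have := H4 i; rewrite H0 in Hi; rewrite Hi /= => /andP[_].
    * split; last by right.
      move=> i Hi; have := H4 i; rewrite H0 in Hi; rewrite Hi /= => /andP[/eqP <-] //.
    * by rewrite H1 H2.
- case=> [->|[p [H1 [Hl1 Hl2] [Hh1 Hh2] H4]]]; first by rewrite /leq_P eqxx.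
  rewrite /leq_P; case: Hl2 => [Hx|[Hp Hx]].
  + apply/orP; left; apply/orP; right; apply/existsP; exists p.
    apply/andP; split; [apply/andP; split; [apply/andP; split|]|].
    * apply/forallP=> i; apply/implyP=> Hi; rewrite eq_sym H1 //.
      by rewrite neq_ltn Hi.
    * by apply/eqP => /=.
    * by apply/eqP => /=; rewrite H4 Hx.
    * apply/forallP=> i; apply/implyP=> Hi; rewrite H1 ?eqxx ?Hl1 //.
      by rewrite neq_ltn Hi orbT.
  + apply/orP; right; apply/andP; split.
    * by apply/existsP; exists p => /=; rewrite Hp Hx H4 Hx.
    * apply/forallP=> i; apply/implyP=> /= Hi; rewrite H1 ?eqxx ?Hl1 //; try by rewrite Hp.
      by apply: contraTneq Hi => ->; rewrite Hp.
Qed.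

Lemma lts_neq n (x y : P n) p : lts x y p -> x != y.
Proof. by case=> _ _ _ H; apply/eqP=> E; rewrite E in H; lia. Qed.

Lemma up_uniq n (x y y' : P n) p p' : lts x y p -> lts x y' p' -> y = y'.
Proof.
case=> H1 Hl Hh H4 [H1' Hl' Hh' H4'].
have E := low_uniq Hl Hl'; subst p'.
apply/ffunP=> i; case: (eqVneq i p) => [->|Hi]; last by rewrite H1 ?H1'.
by apply: val_inj; rewrite /= H4 H4'.
Qed.

Lemma down_uniq n (x x' y : P n) p p' : lts x y p -> lts x' y p' -> x = x'.
Proof.
case=> H1 Hl Hh H4 [H1' Hl' Hh' H4'].
have E := high_uniq Hh Hh'; subst p'.
apply/ffunP=> i; case: (eqVneq i p) => [->|Hi]; last by rewrite -H1 ?H1'.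
by apply: val_inj; move: H4'; rewrite H4 => -[].
Qed.

Lemma no_chain n (x y z : P n) p p' : lts x y p -> lts y z p' -> False.
Proof. by case=> _ _ Hh _ [_ Hl _ _]; apply: (low_high Hl Hh). Qed.

Lemma P_poset n : is_poset (@leq_P n).
Proof.
split.
- by move=> x; rewrite /leq_P eqxx.
- move=> x y /andP[/leq_PP [//|[p H]] /leq_PP [E|[p' H']]]; first by rewrite E.
  by case: (no_chain H H').
- move=> y x z /leq_PP [->//|[p H]] /leq_PP [<-|[p' H']].
  + by apply/leq_PP; right; exists p.
  + by case: (no_chain H H').
Qed.

Definition ext k m (s : P k) : P m :=
  [ffun i : 'I_m => match (insub (val i) : option 'I_k) with Some j => s j | None => ord0 end].

Lemma ext_lo k m (s : P k) (i : 'I_m) (j : 'I_k) : val i = val j -> ext m s i = s j.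
Proof.
move=> E; rewrite /ext ffunE; case: insubP => [u _ Hu|]; first by congr (s _); apply: val_inj; rewrite Hu.
by rewrite E ltn_ord.
Qed.

Lemma ext_hi k m (s : P k) (i : 'I_m) : k <= val i -> ext m s i = ord0.
Proof.
move=> E; rewrite /ext ffunE; case: insubP => [u Hu _|//].
by move: Hu; rewrite ltnNge E.
Qed.

Lemma restr_ext k m (H : k <= m) (s : P k) : restr H (ext m s) = s.
Proof. by apply/ffunP=> i; rewrite ffunE (ext_lo _ (j := i)). Qed.

Lemma ext_lts k m (H : k <= m) (s s' : P k) p :
  lts s s' p -> lts (ext m s) (ext m s') (widen_ord H p).
Proof.
case=> H1 [Hl1 Hl2] [Hh1 Hh2] H4.
have Ep : forall t : P k, ext m t (widen_ord H p) = t p by move=> t; apply: ext_lo.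
split.
- move=> i Hi; case: (ltnP i k) => Hik.
  + rewrite !(ext_lo _ (j := Ordinal Hik)) //; apply: H1.
    by apply: contra Hi => /eqP E; apply/eqP/val_inj; rewrite /= -E.
  + by rewrite !ext_hi.
- split; last by rewrite Ep.
  move=> i Hi; case: (ltnP i k) => Hik; last by rewrite ext_hi.
  by rewrite (ext_lo _ (j := Ordinal Hik)) //; apply: Hl1.
- split; last by rewrite Ep.
  move=> i Hi; case: (ltnP i k) => Hik; last by rewrite ext_hi.
  by rewrite (ext_lo _ (j := Ordinal Hik)) //; apply: Hh1.
- by rewrite !Ep.
Qed.

Lemma restr_lts k m (H : k <= m) (x y : P m) (p : 'I_m) (Hp : p < k) :
  lts x y p -> lts (restr H x) (restr H y) (Ordinal Hp).
Proof.
case=> H1 [Hl1 Hl2] [Hh1 Hh2] H4.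
have Ep : widen_ord H (Ordinal Hp) = p by apply: val_inj.
split.
- move=> i Hi; rewrite !ffunE H1 //.
- by split; [move=> i Hi; rewrite ffunE; apply: Hl1|rewrite ffunE Ep].
- by split; [move=> i Hi; rewrite ffunE; apply: Hh1|rewrite ffunE Ep].
- by rewrite !ffunE Ep.
Qed.

Lemma restr_eq k m (H : k <= m) (x y : P m) p :
  lts x y p -> k <= p -> restr H x = restr H y.
Proof.
case=> H1 _ _ _ Hp; apply/ffunP=> i; rewrite !ffunE H1 //.
apply/eqP=> E; have := ltn_ord i; have : nat_of_ord (widen_ord H i) = nat_of_ord p by rewrite E. rewrite /=; lia.
Qed.

Lemma restr_quot k m (H : k <= m) : quotient_map (@leq_P m) (@leq_P k) (restr H).
Proof.
split.
- by move=> b; exists (ext m b); apply: restr_ext.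
- move=> x y /leq_PP [->|[p Hp]]; first by apply/leq_PP; left.
  case: (ltnP p k) => Hpk.
  + by apply/leq_PP; right; exists (Ordinal Hpk); apply: restr_lts.
  + by rewrite (restr_eq H Hp Hpk); apply/leq_PP; left.
- move=> a b /leq_PP [->|[p Hp]].
  + by exists (ext m b), (ext m b); rewrite restr_ext; split => //; apply/leq_PP; left.
  + exists (ext m a), (ext m b); rewrite !restr_ext; split => //.
    by apply/leq_PP; right; exists (widen_ord H p); apply: ext_lts.
Qed.

Definition catP k m (s : P k) (t : P m) : P (k + m) :=
  [ffun i => match split i with inl j => s j | inr j => t j end].
Definition tailP k m (z : P (k + m)) : P m := [ffun j => z (rshift k j)].

Lemma cat_lo k m (s : P k) (t : P m) j : catP s t (lshift m j) = s j.
Proof. by rewrite /catP ffunE -[lshift m j]/(unsplit (inl j)) unsplitK. Qed.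

Lemma cat_hi k m (s : P k) (t : P m) j : catP s t (rshift k j) = t j.
Proof. by rewrite /catP ffunE -[rshift k j]/(unsplit (inr j)) unsplitK. Qed.

Lemma restr_cat k m (H : k <= k + m) (s : P k) (t : P m) : restr H (catP s t) = s.
Proof.
apply/ffunP=> i; rewrite ffunE -(cat_lo s t i); congr (catP s t _).
by apply: val_inj.
Qed.

Lemma tail_cat k m (s : P k) (t : P m) : tailP (catP s t) = t.
Proof. by apply/ffunP=> i; rewrite ffunE cat_hi. Qed.

Lemma cat_lts_lo k m (s s' : P k) (t : P m) p :
  lts s s' p -> (forall j, t j < 2) -> lts (catP s t) (catP s' t) (lshift m p).
Proof.
case=> H1 [Hl1 Hl2] [Hh1 Hh2] H4 Ht.
split.
- move=> i Hi; rewrite /catP !ffunE; case: splitP => j Ej //.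
  apply: H1; apply: contra Hi => /eqP E; apply/eqP/val_inj; rewrite /= Ej E //.
- split; last by rewrite cat_lo.
  move=> i Hi; rewrite /catP !ffunE; case: splitP => j Ej //.
  by apply: Hl1; rewrite -Ej.
- split; last by rewrite cat_lo.
  move=> i Hi; rewrite /catP !ffunE; case: splitP => j Ej //.
  by apply: Hh1; rewrite -Ej.
- by rewrite !cat_lo.
Qed.

Lemma cat_lts_hi k m (s : P k) (t t' : P m) j :
  lts t t' j -> (t j : nat) = 2 -> lts (catP s t) (catP s t') (rshift k j).
Proof.
case=> H1 [Hl1 Hl2] [Hh1 Hh2] H4 Ht.
split.
- move=> i Hi; rewrite /catP !ffunE; case: splitP => j' Ej //.
  apply: H1; apply: contra Hi => /eqP E; apply/eqP/val_inj; rewrite /= Ej E //.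
- split; last by rewrite cat_hi; left.
  move=> i Hi; rewrite /catP !ffunE; case: splitP => j' Ej.
  + by have := ltn_ord j'; move: Hi; rewrite Ej /=; lia.
  + by apply: Hl1; move: Hi; rewrite Ej /=; lia.
- split; last by rewrite cat_hi; left; rewrite H4 Ht.
  move=> i Hi; rewrite /catP !ffunE; case: splitP => j' Ej.
  + by have := ltn_ord j'; move: Hi; rewrite Ej /=; lia.
  + by apply: Hh1; move: Hi; rewrite Ej /=; lia.
- by rewrite !cat_hi.
Qed.

Lemma lts_split k m (H : k <= k + m) (z z' : P (k + m)) p : lts z z' p ->
  (exists p', lts (restr H z) (restr H z') p' /\ tailP z = tailP z' /\
              forall j, tailP z j < 2)
  \/ (restr H z = restr H z' /\ exists j, lts (tailP z) (tailP z') j).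
Proof.
move=> L; case: (ltnP p k) => Hpk.
- left; exists (Ordinal Hpk); split; first exact: restr_lts.
  case: L => H1 [Hl1 _] _ _.
  split.
  + apply/ffunP=> j; rewrite !ffunE H1 //.
    apply/eqP=> E; have : nat_of_ord (rshift k j) = nat_of_ord p by rewrite E.
    rewrite /=; lia.
  + by move=> j; rewrite ffunE; apply: Hl1 => /=; lia.
- right; split; first exact: (restr_eq H L).
  have Hj : p - k < m by have := ltn_ord p; lia.
  have Ep : rshift k (Ordinal Hj) = p by apply: val_inj => /=; lia.
  exists (Ordinal Hj); case: L => H1 [Hl1 Hl2] [Hh1 Hh2] H4.
  split.
  + move=> i Hi; rewrite !ffunE H1 //; apply: contra Hi => /eqP E.
    apply/eqP/val_inj => /=; have : nat_of_ord (rshift k i) = nat_of_ord p by rewrite E.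
    rewrite /=; lia.
  + split; last by rewrite ffunE Ep; case: Hl2 => [->|[? ->]]; [left|right] => //=; lia.
    by move=> i Hi; rewrite ffunE; apply: Hl1 => /=; move: Hi => /=; lia.
  + split; last by rewrite ffunE Ep; case: Hh2 => [->|[? ->]]; [left|right] => //=; lia.
    by move=> i Hi; rewrite ffunE; apply: Hh1 => /=; move: Hi => /=; lia.
  + by rewrite !ffunE Ep.
Qed.

Section Construction.
Variables (k : nat) (Y : finType) (leY : rel Y) (f : Y -> P k) (y0 : Y).
Hypotheses (HY : is_poset leY) (Hf : quotient_map leY (@leq_P k) f).

Let m := #|{: Y * Y}|.+1.

Definition Eix (i : 'I_m) : Y * Y := nth (y0, y0) (enum {: Y * Y}) i.-1.

Lemma E_surj q : exists i : 'I_m, 0 < i /\ Eix i = q.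
Proof.
have Hi : (index q (enum {: Y * Y})).+1 < m.
  by rewrite /m ltnS cardE index_mem mem_enum.
exists (Ordinal Hi); split => //.
by rewrite /Eix /= nth_index // mem_enum.
Qed.

Definition Lp (a b : P k) : Y * Y :=
  odflt (y0, y0) [pick q : Y * Y | leY q.1 q.2 && (f q.1 == a) && (f q.2 == b)].

Lemma Lp_spec a b : leq_P a b ->
  [/\ leY (Lp a b).1 (Lp a b).2, f (Lp a b).1 = a & f (Lp a b).2 = b].
Proof.
move=> Hab; rewrite /Lp; case: pickP => [q /andP[/andP[H1 /eqP H2] /eqP H3]|H] //=.
case: Hf => _ _ /(_ _ _ Hab) [x [y [Hxy Hx Hy]]].
by move: (H (x, y)); rewrite /= Hxy Hx Hy !eqxx.
Qed.

Definition fib (s : P k) : Y := odflt y0 [pick y | f y == s].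

Lemma fib_spec s : f (fib s) = s.
Proof.
rewrite /fib; case: pickP => [y /eqP //|H].
case: Hf => /(_ s) [y Hy] _ _.
by move: (H y); rewrite Hy eqxx.
Qed.

Definition dd (s : P k) : Y :=
  match [pick t | (s != t) && leq_P s t] with
  | Some t => (Lp s t).1
  | None => match [pick t | (t != s) && leq_P t s] with
            | Some t => (Lp t s).2
            | None => fib s
            end
  end.

Lemma strictP n (x y : P n) : x != y -> leq_P x y -> exists p, lts x y p.
Proof. by move=> Hn /leq_PP [E|//]; rewrite E eqxx in Hn. Qed.

Lemma dd_fib s : f (dd s) = s.
Proof.
rewrite /dd; case: pickP => [t /andP[_ H]|_]; first by case: (Lp_spec H).
case: pickP => [t /andP[_ H]|_]; first by case: (Lp_spec H).
exact: fib_spec.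
Qed.

Lemma dd_lo a b p : lts a b p -> dd a = (Lp a b).1.
Proof.
move=> L; rewrite /dd; case: pickP => [t /andP[H1 H2]|H].
- have [p' L'] := strictP H1 H2.
  by rewrite (up_uniq L' L).
- have Hab : leq_P a b by apply/leq_PP; right; exists p.
  by move: (H b); rewrite (lts_neq L) Hab.
Qed.

Lemma dd_hi a b p : lts a b p -> dd b = (Lp a b).2.
Proof.
move=> L; rewrite /dd; case: pickP => [t /andP[H1 H2]|_].
  by have [p' L'] := strictP H1 H2; case: (no_chain L L').
case: pickP => [t /andP[H1 H2]|H].
- have [p' L'] := strictP H1 H2.
  by rewrite (down_uniq L' L).
- have Hab : leq_P a b by apply/leq_PP; right; exists p.
  by move: (H a); rewrite (lts_neq L) Hab.
Qed.

Lemma leY_refl y : leY y y.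
Proof. by case: HY. Qed.

Lemma dd_mono a b : leq_P a b -> leY (dd a) (dd b).
Proof.
move=> /leq_PP [->|[p L]]; first exact: leY_refl.
rewrite (dd_lo L) (dd_hi L).
have Hab : leq_P a b by apply/leq_PP; right; exists p.
by case: (Lp_spec Hab).
Qed.

Definition hh (q : Y * Y) (s : P k) : Y :=
  if leY q.1 q.2 && (f q.1 != f q.2) then
    (if s == f q.1 then q.1 else if s == f q.2 then q.2 else dd s)
  else dd s.

Lemma hh_fib q s : f (hh q s) = s.
Proof.
rewrite /hh; case: ifP => _; last exact: dd_fib.
case: eqP => [->//|_]; case: eqP => [->//|_]; exact: dd_fib.
Qed.

Lemma f_mono x y : leY x y -> leq_P (f x) (f y).
Proof. by case: Hf => _ H _; apply: H. Qed.

Lemma hh_mono q a b : leq_P a b -> leY (hh q a) (hh q b).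
Proof.
move=> Hab; rewrite /hh; case: ifP => [/andP[Hq Hn]|_]; last exact: dd_mono.
case: (eqVneq a b) => [<-|Hnab]; first exact: leY_refl.
have [p L] := strictP Hnab Hab.
have [p0 L0] := strictP Hn (f_mono Hq).
case: (eqVneq a (f q.1)) => Ha.
- have Eb : b = f q.2 by rewrite Ha in L; apply: (up_uniq L L0).
  have Hb1 : b != f q.1 by rewrite -Ha eq_sym.
  by rewrite (negbTE Hb1) Eb eqxx.
- case: (eqVneq a (f q.2)) => Ha2.
    by rewrite Ha2 in L; case: (no_chain L0 L).
  case: (eqVneq b (f q.1)) => Hb1.
    by rewrite Hb1 in L; case: (no_chain L L0).
  case: (eqVneq b (f q.2)) => Hb2.
    by rewrite Hb2 in L; move: Ha; rewrite (down_uniq L L0) eqxx.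
  exact: dd_mono.
Qed.

Definition Qq (j : 'I_m) (s : P k) : Y * Y :=
  let q := Eix j in
  if leY q.1 q.2 && (f q.1 == s) && (f q.2 == s) then q else (dd s, dd s).

Lemma Qq_spec j s : [/\ leY (Qq j s).1 (Qq j s).2, f (Qq j s).1 = s & f (Qq j s).2 = s].
Proof.
rewrite /Qq; case: ifP => [/andP[/andP[H1 /eqP H2] /eqP H3]|_] //=.
by rewrite dd_fib; split => //; apply: leY_refl.
Qed.

Definition GG (s : P k) (t : P m) : Y :=
  match [pick j : 'I_m | (1 < t j) && [forall i : 'I_m, (j < i) ==> (t i < 2)]] with
  | Some j => if (t j : nat) == 3 then (Qq j s).2 else (Qq j s).1
  | None => match [pick i : 'I_m | (0 < i) && ((t i : nat) == 1)] with
            | Some i => hh (Eix i) s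
            | None => dd s
            end
  end.

Lemma GG_fib (s : P k) (t : P m) : f (GG s t) = s.
Proof.
rewrite /GG; case: pickP => [j _|_].
  by case: (Qq_spec j s) => _ H1 H2; case: ifP.
case: pickP => [i _|_]; [exact: hh_fib|exact: dd_fib].
Qed.

Lemma GG_lo (s s' : P k) (t : P m) : leq_P s s' -> (forall j, t j < 2) -> leY (GG s t) (GG s' t).
Proof.
move=> Hs Ht; rewrite /GG; case: pickP => [j /andP[Hj _]|_].
  by have := Ht j; lia.
case: pickP => [i _|_]; [exact: hh_mono|exact: dd_mono].
Qed.

Lemma pick_last (t : P m) (j : 'I_m) : 1 < t j -> (forall i : 'I_m, j < i -> t i < 2) ->
  [pick j' : 'I_m | (1 < t j') && [forall i : 'I_m, (j' < i) ==> (t i < 2)]] = Some j.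
Proof.
move=> Hj Ha; case: pickP => [j' /andP[H1 /forallP H2]|H].
- congr Some; case: (ltngtP j j') => E.
  + by have := Ha _ E; lia.
  + by move/implyP: (H2 j) => /(_ E); lia.
  + exact: val_inj.
- move: (H j); rewrite Hj /=; move/negbT; case/forallPn => i.
  by rewrite negb_imply => /andP[/Ha ->].
Qed.

Lemma GG_hi (s : P k) (t t' : P m) j : lts t t' j -> leY (GG s t) (GG s t').
Proof.
case=> H1 [Hl1 Hl2] [Hh1 Hh2] H4.
case: Hl2 => [Ht2|[Hj0 Ht0]].
- have Ht3 : (t' j : nat) = 3 by rewrite H4 Ht2.
  rewrite /GG (pick_last (t := t) (j := j)); [|by rewrite Ht2|exact: Hl1].
  rewrite (pick_last (t := t') (j := j)); [|by rewrite Ht3|exact: Hh1].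
  rewrite Ht2 Ht3 /=.
  by case: (Qq_spec j s).
- have Ht : forall i, t i < 2.
    move=> i; case: (eqVneq i j) => [->|Hi]; first by rewrite Ht0.
    apply: Hl1; have : (i : nat) <> j by move=> E; move/eqP: Hi; apply; apply: val_inj.
    lia.
  have Ht' : forall i, t' i < 2.
    move=> i; case: (eqVneq i j) => [->|Hi]; first by rewrite H4 Ht0.
    apply: Hh1; have : (i : nat) <> j by move=> E; move/eqP: Hi; apply; apply: val_inj.
    lia.
  have Ep : [pick i : 'I_m | (0 < i) && ((t' i : nat) == 1)] =
            [pick i : 'I_m | (0 < i) && ((t i : nat) == 1)].
    apply: eq_pick => i /=; case: (posnP i) => [//|Hi].
    rewrite H1 //; apply/eqP => E; move: Hi; rewrite E Hj0 ltnn //.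
  have N1 : [pick j : 'I_m | (1 < t j) && [forall i : 'I_m, (j < i) ==> (t i < 2)]] = None.
    by case: pickP => [j1 /andP[Hj1 _]|//]; have := Ht j1; lia.
  have N2 : [pick j : 'I_m | (1 < t' j) && [forall i : 'I_m, (j < i) ==> (t' i < 2)]] = None.
    by case: pickP => [j1 /andP[Hj1 _]|//]; have := Ht' j1; lia.
  rewrite /GG N1 N2 Ep.
  exact: leY_refl.
Qed.

Definition onehot (j : 'I_m) (c : nat) : P m := [ffun i => if i == j then inord c else ord0].

Lemma onehot_val (j i : 'I_m) c : c < 4 -> (onehot j c i : nat) = if i == j then c else 0.
Proof. by move=> Hc; rewrite ffunE; case: eqP => _ //; rewrite inordK. Qed.

Lemma onehot_lts j : lts (onehot j 2) (onehot j 3) j.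
Proof.
split.
- by move=> i Hi; rewrite !ffunE (negbTE Hi).
- split; last by left; rewrite onehot_val // eqxx.
  by move=> i Hi; rewrite onehot_val //; case: eqP => // E; rewrite E ltnn in Hi.
- split; last by left; rewrite onehot_val // eqxx.
  by move=> i Hi; rewrite onehot_val //; case: eqP => // E; rewrite E ltnn in Hi.
- by rewrite !onehot_val // eqxx.
Qed.

Lemma GG_two (s : P k) (j : 'I_m) : GG s (onehot j 2) = (Qq j s).1.
Proof.
rewrite /GG (pick_last (t := onehot j 2) (j := j)).
- by rewrite onehot_val // eqxx.
- by rewrite onehot_val // eqxx.
- by move=> i Hi; rewrite onehot_val //; case: eqP => [E|//]; rewrite E ltnn in Hi.
Qed.

Lemma GG_three (s : P k) (j : 'I_m) : GG s (onehot j 3) = (Qq j s).2.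
Proof.
rewrite /GG (pick_last (t := onehot j 3) (j := j)).
- by rewrite onehot_val // eqxx.
- by rewrite onehot_val // eqxx.
- by move=> i Hi; rewrite onehot_val //; case: eqP => [E|//]; rewrite E ltnn in Hi.
Qed.

Lemma GG_one (s : P k) (i : 'I_m) : 0 < i -> GG s (onehot i 1) = hh (Eix i) s.
Proof.
move=> Hi.
have Ht : forall j, onehot i 1 j < 2 by move=> j; rewrite onehot_val //; case: eqP.
have N1 : [pick j : 'I_m | (1 < onehot i 1 j) &&
            [forall i0 : 'I_m, (j < i0) ==> (onehot i 1 i0 < 2)]] = None.
  by case: pickP => [j1 /andP[Hj1 _]|//]; have := Ht j1; lia.
rewrite /GG N1; case: pickP => [i1 /andP[_]|/(_ i)].
- move=> H; suff -> : i1 = i by [].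
  move: H; rewrite /= onehot_val //; by case: (eqVneq i1 i).
- by rewrite /= onehot_val // eqxx Hi.
Qed.

Lemma construction : exists (Hkl : k < k + m) (g : P (k + m) -> Y),
  quotient_map (@leq_P (k + m)) leY g /\
  (forall z, f (g z) = restr (ltnW Hkl) z).
Proof.
have Hkl : k < k + m by rewrite /m; lia.
exists Hkl, (fun z => GG (restr (ltnW Hkl) z) (tailP z)).
split; last by move=> z; apply: GG_fib.
split.
- move=> y; have [j [_ Ej]] := E_surj (y, y).
  exists (catP (f y) (onehot j 2)); rewrite restr_cat tail_cat GG_two /Qq Ej /=.
  by rewrite leY_refl eqxx.
- move=> z z' /leq_PP [->|[p L]]; first exact: leY_refl.
  case: (lts_split (ltnW Hkl) L) => [[p' [L' [Et Ht]]]|[Er [j L']]].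
  + rewrite -Et; apply: GG_lo => //; apply/leq_PP; right; by exists p'.
  + rewrite Er; exact: GG_hi L'.
- move=> p r Hpr; case: (eqVneq (f p) (f r)) => Hfpr.
  + have [j [_ Ej]] := E_surj (p, r).
    exists (catP (f p) (onehot j 2)), (catP (f p) (onehot j 3)).
    rewrite !restr_cat !tail_cat GG_two GG_three /Qq Ej /= Hpr Hfpr !eqxx /=.
    split => //; apply/leq_PP; right; exists (rshift k j).
    by apply: cat_lts_hi; [exact: onehot_lts|rewrite onehot_val // eqxx].
  + have [i [Hi Ei]] := E_surj (p, r).
    exists (catP (f p) (onehot i 1)), (catP (f r) (onehot i 1)).
    rewrite !restr_cat !tail_cat !GG_one // /hh Ei /= Hpr Hfpr /= eqxx.
    rewrite eq_sym (negbTE Hfpr) eqxx; split => //.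
    have [p0 L0] := strictP Hfpr (f_mono Hpr).
    apply/leq_PP; right; exists (lshift m p0); apply: cat_lts_lo => // j.
    by rewrite onehot_val //; case: eqP.
Qed.

End Construction.

Lemma P0_eq (a b : P 0) : a = b.
Proof. by apply/ffunP => -[]. Qed.

Theorem mainTheorem3 :
  (* the P_n are finite posets and the bonding maps are quotient maps *)
  (forall n : nat, is_poset (@leq_P n)) /\
  (forall (k m : nat) (H : k <= m),
     quotient_map (@leq_P m) (@leq_P k) (restr H)) /\
  (* (U) *)
  (forall (T : finType) (le : rel T), is_poset le -> 0 < #|T| ->
     exists (n : nat) (phi : P n -> T), quotient_map (@leq_P n) le phi) /\
  (* (A) *)
  (forall (k : nat) (Y : finType) (leY : rel Y) (f : Y -> P k),
     is_poset leY -> quotient_map leY (@leq_P k) f ->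
     exists (l : nat) (Hkl : k < l) (g : P l -> Y),
       quotient_map (@leq_P l) leY g /\
       (forall z : P l, f (g z) = restr (ltnW Hkl) z)).
Proof.
split; first exact: P_poset.
split; first exact: restr_quot.
have HA : forall (k : nat) (Y : finType) (leY : rel Y) (f : Y -> P k),
     is_poset leY -> quotient_map leY (@leq_P k) f ->
     exists (l : nat) (Hkl : k < l) (g : P l -> Y),
       quotient_map (@leq_P l) leY g /\
       (forall z : P l, f (g z) = restr (ltnW Hkl) z).
  move=> k Y leY f HY Hf.
  have [y0 _] : exists y : Y, True.
    by case: Hf => /(_ [ffun=> ord0]) [y _] _ _; exists y.
  have [Hkl [g [Hg Hfg]]] := construction y0 HY Hf.
  by exists (k + #|{: Y * Y}|.+1), Hkl, g.
split; last exact: HA.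
move=> T le HT /card_gt0P [t0 _].
pose f := fun _ : T => ([ffun=> ord0] : P 0).
have Hf : quotient_map le (@leq_P 0) f.
  split.
  - by move=> b; exists t0; apply: P0_eq.
  - by move=> x y _; rewrite /leq_P eqxx.
  - move=> p r _; exists t0, t0; split; [by case: HT|apply: P0_eq|apply: P0_eq].
have [l [Hkl [g [Hg _]]]] := HA 0 T le f HT Hf.
by exists l, g.
Qed.
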